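(* Let $q$ be a prime power, $k,m$ positive integers with $km$ even, $V=\mathbb F_{q^m}^k$, and let $U$ be a scattered $[\frac{km}{2},k]_{q^m/q}$ system. Then the following are equivalent: (1) $U$ is $(2,m-1)_q$-evasive; (2) $U^{\tau'}$ is a $\left(k-2,\frac{km}{2}-m-1\right)_q$-evasive $[\frac{km}{2},k]_{q^m/q}$ system; (3) $U^{\tau'}$ is a cutting $[\frac{km}{2},k]_{q^m/q}$ system.
   Context: An $[n,k]_{q^m/q}$ system is an $\mathbb F_q$-subspace $U$ of $\mathbb F_{q^m}^k$ with $\dim_{\mathbb F_q}(U)=n$ and $\langle U\rangle_{\mathbb F_{q^m}}=\mathbb F_{q^m}^k$. It is $(h,r)_q$-evasive if $\dim_{\mathbb F_q}(U\cap H)\le r$ for every $h$-dimensional $\mathbb F_{q^m}$-subspace $H$; scattered means $(1,1)_q$-evasive; cutting means $\langle H\cap U\rangle_{\mathbb F_{q^m}}=H$ for every $\mathbb F_{q^m}$-hyperplane $H$. Let $\sigma:V\times V\to\mathbb F_{q^m}$ be a nondegenerate $\mathbb F_{q^m}$-bilinear form and $\sigma'(u,v)=\mathrm{Tr}_{q^m/q}(\sigma(u,v))$, a nondegenerate $\mathbb F_q$-bilinear form on $V$ viewed as a $km$-dimensional $\mathbb F_q$-space. $U^{\tau'}$ denotes the orthogonal complement of $U$ with respect to $\sigma'$ (the dual of $U$). *)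

(* Defs.v *)
From HB Require Import structures.
From mathcomp Require Import all_boot all_order all_algebra all_field.
Set Implicit Arguments. Unset Strict Implicit. Unset Printing Implicit Defensive.
Import Order.TTheory GRing.Theory Num.Theory.
Local Open Scope ring_scope.

(* Setting: F = F_q a finite field, L = F_{q^m} a finite extension of F of
   degree m = \dim {:L}.  The ambient space V = F_{q^m}^k is modelled as
   {ffun 'I_k -> L}, which carries the canonical F-vector space (vectType F)
   structure; U is then an F-subspace {vspace (Vk L k)}. *)

Definition Vk (F : finFieldType) (L : fieldExtType F) (k : nat) :=
  {ffun 'I_k -> L}.

Section Defs.
Variables (F : finFieldType) (L : fieldExtType F) (k : nat).
Local Notation V := (Vk L k).

Definition extdeg := \dim {: L}.

Definition Lscale (a : L) (v : V) : V := [ffun i => a * v i].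

(* an F-subspace is an F_{q^m}-subspace iff it is closed under F_{q^m}-scaling *)
Definition Lclosed (H : {vspace V}) : Prop :=
  forall (a : L) (v : V), v \in H -> Lscale a v \in H.

Definition is_Lspan (W H : {vspace V}) : Prop :=
  [/\ Lclosed H, (W <= H)%VS &
      forall H' : {vspace V}, Lclosed H' -> (W <= H')%VS -> (H <= H')%VS].

Definition Ldim_eq (H : {vspace V}) (h : int) : Prop :=
  (\dim H)%:Z = h * (extdeg%:Z).

Definition is_system (U : {vspace V}) (n : nat) : Prop :=
  \dim U = n /\ is_Lspan U fullv.

Definition evasive (U : {vspace V}) (h r : int) : Prop :=
  forall H : {vspace V}, Lclosed H -> Ldim_eq H h -> (\dim (U :&: H))%:Z <= r.

Definition scattered (U : {vspace V}) : Prop := evasive U 1 1.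

Definition cutting (U : {vspace V}) : Prop :=
  forall H : {vspace V}, Lclosed H -> Ldim_eq H (k%:Z - 1) -> is_Lspan (H :&: U) H.

Definition trace (x : L) : L := \sum_(i < extdeg) x ^+ (#|F| ^ i).

Definition Lbilinear (s : V -> V -> L) : Prop :=
  [/\ forall u u' v, s (u + u') v = s u v + s u' v,
      forall u v v', s u (v + v') = s u v + s u v',
      forall a u v, s (Lscale a u) v = a * s u v &
      forall a u v, s u (Lscale a v) = a * s u v].

Definition nondeg_form (s : V -> V -> L) : Prop :=
  (forall u, (forall v, s u v = 0) -> u = 0) /\
  (forall v, (forall u, s u v = 0) -> v = 0).

(* W = U^{tau'}: orthogonal complement of U w.r.t. sigma' = Tr o sigma *)
Definition is_dual (s : V -> V -> L) (U W : {vspace V}) : Prop :=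
  forall v : V, v \in W <-> (forall u : V, u \in U -> trace (s u v) = 0).

End Defs.

(* Main.v *)
Set Warnings "-notation-overridden -ambiguous-paths -deprecated -redundant-canonical-projection".
Require Import Defs.
From HB Require Import structures.
From mathcomp Require Import all_boot all_order all_algebra all_field all_fingroup all_solvable zify ring.
Import Order.TTheory GRing.Theory Num.Theory.
Local Open Scope ring_scope.
Set Implicit Arguments. Unset Strict Implicit. Unset Printing Implicit Defensive.
Section FF.
Variables (F : finFieldType) (L : fieldExtType F).
Local Notation q := #|F|.

Lemma q_gt1 : (1 < q)%N. Proof. exact: finNzRing_gt1. Qed.

Lemma m_gt0 : (0 < \dim {:L})%N.
Proof. exact: (adim_gt0 (aspacef L)). Qed.

Lemma pnat_q : [pchar L].-nat q.
Proof.
have [p pr_p pc] := finPcharP F.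
have := abelem_pgroup (fin_ring_pchar_abelem pc).
rewrite pgroupE cardsT => H.
have pcL : p \in [pchar L] by rewrite (pchar_lalg L).
by rewrite (eq_pnat _ (pcharf_eq pcL)).
Qed.

Lemma frobD (x y : L) i : (x + y) ^+ (q ^ i) = x ^+ (q ^ i) + y ^+ (q ^ i).
Proof. by apply: exprDn_pchar; rewrite pnatX pnat_q. Qed.

Lemma expF (c : F) i : c ^+ (q ^ i) = c.
Proof.
elim: i => [|i IH]; first by rewrite expn0 expr1.
by rewrite expnSr exprM IH expf_card.
Qed.

Lemma frob_sum n (f : 'I_n -> L) j :
  (\sum_(i < n) f i) ^+ (q ^ j) = \sum_(i < n) (f i) ^+ (q ^ j).
Proof.
apply: (big_morph (fun x : L => x ^+ (q ^ j))).
  by move=> x y; apply: frobD.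
by rewrite expr0n expn_eq0 (negbTE (lt0n_neq0 (ltnW q_gt1))).
Qed.

Lemma trace_add (x y : L) : trace (x + y) = trace x + trace y.
Proof. by rewrite /trace -big_split; apply: eq_bigr => i _; apply: frobD. Qed.

Lemma trace_scale (c : F) (x : L) : trace (c *: x) = c *: trace x.
Proof.
rewrite /trace scaler_sumr; apply: eq_bigr => i _.
by rewrite exprZn expF.
Qed.

Lemma trace_in1 (x : L) : trace x \in (1%VS : {vspace L}).
Proof.
rewrite (Fermat's_little_theorem 1%AS) dimv1 expn1.
have fx : x ^+ (q ^ \dim {:L}) = x.
  by apply/eqP; rewrite -(Fermat's_little_theorem (aspacef L)) memvf.
rewrite /trace /extdeg.
have := m_gt0; case Em: (\dim {:L}) => [|n] // _.
rewrite -(expn1 q) frob_sum; apply/eqP.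
under eq_bigr => i _ do rewrite -exprM -expnSr.
rewrite big_ord_recr big_ord_recl /= -Em fx expn0 expr1 addrC; congr (_ + _).
Qed.

Lemma card_L : #|finvect_type L| = (q ^ \dim {:L})%N.
Proof.
have := card_vspace (fullv : {vspace finvect_type L}).
by rewrite card_vspacef.
Qed.

Lemma trace_nz : exists x : L, trace x != 0.
Proof.
case: (pickP (fun x : finvect_type L => trace (x : L) != 0)) => [x hx|allz].
  by exists x.
exfalso.
pose P : {poly L} := \sum_(i < \dim {:L}) 'X^(q ^ i).
have hP x : P.[x] = trace x.
  by rewrite /P horner_sum /trace; apply: eq_bigr => i _; rewrite hornerXn.
have := m_gt0; case Em: (\dim {:L}) => [|n] // _.
have P1 : P`_1 = 1.
  rewrite /P coef_sum Em big_ord_recl /= coefXn expn0 eqxx big1 ?addr0 //.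
  move=> i _; rewrite coefXn /bump /=.
  have : (1 < q ^ (1 + i))%N by rewrite expnS (leq_trans q_gt1) // leq_pmulr // expn_gt0 ltnW // q_gt1.
  by case: (q ^ (1 + i))%N => [|[|]].
have Pnz : P != 0 by apply/eqP => P0; move: P1; rewrite P0 coef0 => /eqP; rewrite eq_sym oner_eq0.
have szP : (size P <= (q ^ n).+1)%N.
  apply: leq_trans (size_sum _ _ _) _; apply/bigmax_leqP => i _.
  rewrite size_polyXn ltnS leq_exp2l ?q_gt1 //.
  by have := ltn_ord i; move: (i : nat); rewrite Em.
have := max_poly_roots Pnz (rs := enum (finvect_type L)).
rewrite enum_uniq.
have -> : all (root P) (enum (finvect_type L)).
  apply/allP => x _; rewrite /root hP; have := allz x; by move/negbFE.
move=> /(_ isT isT); rewrite -cardE card_L Em => h.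
have := leq_trans h szP; rewrite ltnS expnS.
have := q_gt1; have : (0 < q ^ n)%N by rewrite expn_gt0 ltnW // q_gt1.
move: (q ^ n)%N => t t0 q1; apply/negP; rewrite -ltnNge.
by rewrite (leq_trans _ (leq_mul q1 (leqnn t))) // mul2n -addnn -addn1 leq_add2l.
Qed.
End FF.
From Stdlib Require Import Classical.
Section VS.
Variables (F : finFieldType) (L : fieldExtType F) (k : nat).
Local Notation V := (Vk L k).
Local Notation m := (\dim {:L}).

Lemma dimV : \dim {: V} = (k * m)%N.
Proof. rewrite dimvf; rewrite /dim /=. by rewrite card_ord dimvf. Qed.

Lemma LscaleE a (v : V) i : Lscale a v i = a * v i.
Proof. by rewrite /Lscale ffunE. Qed.

Lemma scaleVE (c : F) (v : V) i : (c *: v) i = c *: v i.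
Proof. by rewrite ffunE. Qed.

Lemma LscaleDl a b (v : V) : Lscale (a + b) v = Lscale a v + Lscale b v.
Proof. by apply/ffunP => i; rewrite !ffunE mulrDl. Qed.

Lemma LscaleDr a (u v : V) : Lscale a (u + v) = Lscale a u + Lscale a v.
Proof. by apply/ffunP => i; rewrite !ffunE mulrDr. Qed.

Lemma LscaleA a b (v : V) : Lscale a (Lscale b v) = Lscale (a * b) v.
Proof. by apply/ffunP => i; rewrite !ffunE mulrA. Qed.

Lemma Lscale1 (v : V) : Lscale 1 v = v.
Proof. by apply/ffunP => i; rewrite !ffunE mul1r. Qed.

Lemma Lscale0 (v : V) : Lscale 0 v = 0.
Proof. by apply/ffunP => i; rewrite !ffunE mul0r. Qed.

Lemma LscaleN a (v : V) : Lscale (- a) v = - Lscale a v.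
Proof. by apply/ffunP => i; rewrite !ffunE mulNr. Qed.

Lemma Lscaler0 a : Lscale a (0 : V) = 0.
Proof. by apply/ffunP => i; rewrite !ffunE mulr0. Qed.

Lemma LscaleZ (c : F) a (v : V) : c *: Lscale a v = Lscale (c *: a) v.
Proof. by apply/ffunP => i; rewrite !ffunE -scalerAl. Qed.

Lemma LscaleZr (c : F) a (v : V) : Lscale a (c *: v) = c *: Lscale a v.
Proof. by apply/ffunP => i; rewrite !ffunE scalerAr. Qed.

Definition Lmul (v : V) (a : L) : V := Lscale a v.

Fact Lmul_lin v : linear (Lmul v).
Proof. by move=> c a b; rewrite /Lmul LscaleDl LscaleZ. Qed.

HB.instance Definition _ v := GRing.isLinear.Build F L V _ (Lmul v) (Lmul_lin v).

Definition Lline (v : V) : {vspace V} := (linfun (Lmul v) @: fullv)%VS.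

Lemma memLline v w : reflect (exists a, w = Lscale a v) (w \in Lline v).
Proof.
apply: (iffP memv_imgP) => [[a _ ->]|[a ->]]; first by exists a; rewrite lfunE.
by exists a; rewrite ?memvf // lfunE.
Qed.

Lemma mem_Lline v : v \in Lline v.
Proof. by apply/memLline; exists 1; rewrite Lscale1. Qed.

Lemma Lclosed_line v : Lclosed (Lline v).
Proof. by move=> a w /memLline[b ->]; apply/memLline; exists (a * b); rewrite LscaleA. Qed.

Lemma Lclosed_cap (S T : {vspace V}) : Lclosed S -> Lclosed T -> Lclosed (S :&: T).
Proof. by move=> cS cT a v; rewrite !memv_cap => /andP[/cS -> /cT ->]. Qed.

Lemma Lclosed_add (S T : {vspace V}) : Lclosed S -> Lclosed T -> Lclosed (S + T).
Proof.
move=> cS cT a w /memv_addP[u uS [v vT ->]].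
by rewrite LscaleDr memv_add ?cS ?cT.
Qed.

Lemma Lclosedf : Lclosed (fullv : {vspace V}).
Proof. by move=> a v _; rewrite memvf. Qed.

Lemma Lclosed0 : Lclosed (0%VS : {vspace V}).
Proof. by move=> a v; rewrite memv0 => /eqP ->; rewrite Lscaler0 mem0v. Qed.

Lemma Lclosed_inv (T : {vspace V}) a v : Lclosed T -> a != 0 -> Lscale a v \in T -> v \in T.
Proof.
move=> cT a0 /(cT a^-1); rewrite LscaleA mulVf // Lscale1 //.
Qed.

Lemma line_cap (T : {vspace V}) v : Lclosed T -> v \notin T -> (T :&: Lline v = 0)%VS.
Proof.
move=> cT vT; apply/eqP; rewrite -subv0; apply/subvP => w.
rewrite memv_cap memv0 => /andP[wT /memLline[a Ew]].
have [a0|a0] := eqVneq a 0; first by rewrite Ew a0 Lscale0.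
by move: vT; rewrite (Lclosed_inv cT a0) // -Ew.
Qed.

Lemma dim_line v : v != 0 -> \dim (Lline v) = m.
Proof.
move=> v0; have := limg_ker_dim (linfun (Lmul v)) fullv.
have -> : lker (linfun (Lmul v)) = 0%VS.
  apply/eqP/lker0P => a b; rewrite !lfunE /Lmul => E.
  have [i vi] : exists i, v i != 0.
    apply/existsP; move: v0; apply: contraR; rewrite negb_exists => /forallP h.
    by apply/eqP/ffunP => i; rewrite ffunE; move: (h i); rewrite negbK => /eqP.
  have := congr1 (fun f : V => f i) E; rewrite !LscaleE => /mulIf; apply; exact: vi.
by rewrite capv0 dimv0.
Qed.

Lemma dim_add_line (T : {vspace V}) v : Lclosed T -> v \notin T ->
  \dim (T + Lline v) = (\dim T + m)%N.
Proof.
move=> cT vT; rewrite dimv_disjoint_sum ?line_cap // dim_line //.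
by apply: contraNneq vT => ->; rewrite mem0v.
Qed.

Lemma exists_notin (H S : {vspace V}) : ~~ (H <= S)%VS -> exists2 v, v \in H & v \notin S.
Proof.
move=> nHS; apply: NNPP => nex; move/negP: nHS; apply; apply/subvP => v vH.
by apply: NNPP => vS; apply: nex; exists v => //; apply/negP.
Qed.

Lemma extend_L j (S H : {vspace V}) : Lclosed S -> Lclosed H -> (S <= H)%VS ->
  (\dim S + j * m <= \dim H)%N ->
  exists T : {vspace V}, [/\ Lclosed T, (S <= T)%VS, (T <= H)%VS & \dim T = (\dim S + j * m)%N].
Proof.
move=> cS cH sSH; elim: j => [|j IH] hd.
  by exists S; rewrite mul0n addn0.
have [|T [cT sST sTH dT]] := IH.
  by apply: leq_trans hd; rewrite leq_add2l leq_mul2r leqnSn orbT.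
have nHT : ~~ (H <= T)%VS.
  apply/negP => sHT; have := dimvS sHT; rewrite dT; move: hd; rewrite mulSn.
  have := m_gt0 L; move: (j * m)%N => t m0 h1 h2.
  have := leq_trans h1 h2; lia.
have [v vH vT] := exists_notin nHT.
exists (T + Lline v)%VS; split.
- by apply: Lclosed_add => //; apply: Lclosed_line.
- exact: subv_trans sST (addvSl _ _).
- rewrite subv_add sTH /=; apply/subvP => w /memLline[a ->]; exact: cH.
- rewrite dim_add_line // dT; lia.
Qed.

Lemma dvd_L (H : {vspace V}) : Lclosed H -> (m %| \dim H)%N.
Proof.
move=> cH.
have hd : (\dim (0%VS : {vspace V}) + \dim H %/ m * m <= \dim H)%N.
  by rewrite dimv0 add0n leq_trunc_div.
have [T [cT _ sTH dT]] := extend_L Lclosed0 cH (sub0v H) hd.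
rewrite dimv0 add0n in dT.
apply: NNPP => ndvd.
have nHT : ~~ (H <= T)%VS.
  apply/negP => sHT; have eHT : H = T.
    by apply/eqP; rewrite eqEdim sHT /= dT leq_trunc_div.
  by apply: ndvd; rewrite eHT dT dvdn_mull.
have [v vH vT] := exists_notin nHT.
have sub : (T + Lline v <= H)%VS.
  rewrite subv_add sTH /=; apply/subvP => w /memLline[a ->]; exact: cH.
have := dimvS sub; rewrite dim_add_line // dT.
have := ltn_ceil (\dim H) (m_gt0 L); rewrite mulSnr.
move: (\dim H %/ m * m)%N => t; lia.
Qed.
End VS.
Section Dual.
Variables (F : finFieldType) (L : fieldExtType F) (k : nat).
Local Notation V := (Vk L k).
Local Notation m := (\dim {:L}).
Variable beta : V -> V -> L.
Hypothesis linl : forall v (c : F) u u', beta (c *: u + u') v = c *: beta u v + beta u' v.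
Hypothesis linr : forall u (c : F) v v', beta u (c *: v + v') = c *: beta u v + beta u v'.
Hypothesis in1 : forall u v, beta u v \in (1%VS : {vspace L}).
Hypothesis ndr : forall v, (forall u, beta u v = 0) -> v = 0.
Hypothesis Lsym : forall a u v, beta (Lscale a u) v = beta u (Lscale a v).

Definition bR (u : V) (v : V) : L := beta u v.
Fact bR_lin u : linear (bR u). Proof. by move=> c v v'; apply: linr. Qed.
HB.instance Definition _ u := GRing.isLinear.Build F V L _ (bR u) (bR_lin u).
Definition bLf (v : V) (u : V) : L := beta u v.
Fact bLf_lin v : linear (bLf v). Proof. by move=> c u u'; apply: linl. Qed.
HB.instance Definition _ v := GRing.isLinear.Build F V L _ (bLf v) (bLf_lin v).

Definition Rd (X : {vspace V}) : {vspace V} :=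
  (\bigcap_(i < \dim X) lker (linfun (bR (tnth (vbasis X) i))))%VS.

Lemma memRd (X : {vspace V}) v : reflect (forall u, u \in X -> beta u v = 0) (v \in Rd X).
Proof.
rewrite memvE; apply: (iffP subv_bigcapP) => [h u uX | h i _].
  rewrite (coord_vbasis uX).
  have -> : beta (\sum_i coord (vbasis X) i u *: (vbasis X)`_i) v =
            bLf v (\sum_i coord (vbasis X) i u *: (vbasis X)`_i) by [].
  rewrite linear_sum big1 // => i _; rewrite linearZ /=.
  have := h i isT; rewrite -memvE memv_ker lfunE /= => /eqP.
  by rewrite /bR /bLf (tnth_nth 0) => ->; rewrite scaler0.
rewrite -memvE memv_ker lfunE /= /bR h //.
by apply: vbasis_mem; apply: mem_tnth.
Qed.

Lemma dim_ker_ge u : (k * m <= \dim (lker (linfun (bR u))) + 1)%N.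
Proof.
have := limg_ker_dim (linfun (bR u)) fullv; rewrite capfv dimV => <-.
rewrite leq_add2l; apply: (@leq_trans (\dim (1%VS : {vspace L}))); last by rewrite dimv1.
apply: dimvS; apply/subvP => w /memv_imgP[v _ ->].
by rewrite lfunE; apply: in1.
Qed.

Lemma bigcap_dim n (K : 'I_n -> {vspace V}) :
  (forall i, k * m <= \dim (K i) + 1)%N ->
  (k * m <= \dim (\bigcap_(i < n) K i)%VS + n)%N.
Proof.
elim: n K => [|n IH] K hK; first by rewrite big_ord0 addn0 dimV.
rewrite big_ord_recr /=.
have := IH (fun i => K (widen_ord (leqnSn n) i)) (fun i => hK _).
have := hK ord_max.
set A := (\bigcap_(i < n) _)%VS; set B := K ord_max.
have := dimv_sum_cap A B; have := dimvS (subvf (A + B)); rewrite dimV.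
lia.
Qed.

Lemma dimRd_ge X : (k * m <= \dim (Rd X) + \dim X)%N.
Proof. by apply: bigcap_dim => i; apply: dim_ker_ge. Qed.

Lemma Rd_full : Rd fullv = 0%VS.
Proof.
apply/eqP; rewrite -subv0; apply/subvP => v /memRd h; rewrite memv0.
by apply/eqP/ndr => u; apply: h; rewrite memvf.
Qed.

Lemma Rd_add X Y : Rd (X + Y) = (Rd X :&: Rd Y)%VS.
Proof.
apply/vspaceP => v; rewrite memv_cap; apply/memRd/andP => [h|[/memRd hX /memRd hY] u].
  split; apply/memRd => u uX; apply: h.
    by apply: (subvP (addvSl X Y)).
  by apply: (subvP (addvSr X Y)).
move=> /memv_addP[x xX [y yY ->]].
by rewrite -[x]scale1r linl hX // hY // scaler0 addr0.
Qed.

Lemma dimRd X : \dim (Rd X) = (k * m - \dim X)%N.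
Proof.
have h1 := dimRd_ge X; have h2 := dimRd_ge X^C.
have h3 := dimv_compl X; rewrite dimV in h3.
have h4 := dimv_sum_cap (Rd X) (Rd X^C).
rewrite -Rd_add addv_complf Rd_full dimv0 addn0 in h4.
have h5 := dimvS (subvf (Rd X + Rd X^C)); rewrite dimV in h5.
have h6 := dimvS (subvf X); rewrite dimV in h6.
lia.
Qed.

Lemma Rd_Lclosed X : Lclosed X -> Lclosed (Rd X).
Proof.
move=> cX a v /memRd h; apply/memRd => u uX.
by rewrite -Lsym; apply: h; apply: cX.
Qed.

Lemma Rd_sub X Y : (X <= Y)%VS -> (Rd Y <= Rd X)%VS.
Proof.
move=> sXY; apply/subvP => v /memRd h; apply/memRd => u uX; apply: h.
exact: (subvP sXY).
Qed.
End Dual.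
Section Main.
Variables (F : finFieldType) (L : fieldExtType F) (k : nat).
Local Notation V := (Vk L k).
Local Notation m := (\dim {:L}).
Variable sigma : V -> V -> L.
Hypothesis sbil : Lbilinear sigma.
Hypothesis snd : nondeg_form sigma.

Lemma scale_Lscale (c : F) (u : V) : c *: u = Lscale c%:A u.
Proof. by apply/ffunP => i; rewrite !ffunE mulr_algl. Qed.

Definition beta (u v : V) := trace (sigma u v).
Definition betaF (u v : V) := trace (sigma v u).

Lemma trace_mulA (c : F) (y : L) : trace (c%:A * y) = c *: trace y.
Proof. by rewrite mulr_algl trace_scale. Qed.

Lemma beta_linl v (c : F) u u' : beta (c *: u + u') v = c *: beta u v + beta u' v.
Proof.
case: sbil => sD _ sZ _.
by rewrite /beta sD scale_Lscale sZ trace_add trace_mulA.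
Qed.

Lemma beta_linr u (c : F) v v' : beta u (c *: v + v') = c *: beta u v + beta u v'.
Proof.
case: sbil => _ sD _ sZ.
by rewrite /beta sD scale_Lscale sZ trace_add trace_mulA.
Qed.

Lemma beta_Lsym a u v : beta (Lscale a u) v = beta u (Lscale a v).
Proof. by case: sbil => _ _ s1 s2; rewrite /beta s1 s2. Qed.

Lemma trace_zero_all (s : L) : (forall a : L, trace (a * s) = 0) -> s = 0.
Proof.
move=> h; apply: NNPP => s0; have [y ty] := trace_nz L.
move: ty; have -> : y = (y / s) * s by rewrite divfK //; apply/eqP.
by rewrite h eqxx.
Qed.

Lemma beta_ndr v : (forall u, beta u v = 0) -> v = 0.
Proof.
move=> h; case: snd => _ nd; apply: nd => u; apply: trace_zero_all => a.
by case: sbil => _ _ s1 _; rewrite -s1; apply: h.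
Qed.

Lemma beta_ndl u : (forall v, beta u v = 0) -> u = 0.
Proof.
move=> h; case: snd => nd _; apply: nd => v; apply: trace_zero_all => a.
by case: sbil => _ _ _ s2; rewrite -s2; apply: h.
Qed.


Lemma betaF_linl v (c : F) u u' : betaF (c *: u + u') v = c *: betaF u v + betaF u' v.
Proof. exact: beta_linr. Qed.
Lemma betaF_linr u (c : F) v v' : betaF u (c *: v + v') = c *: betaF u v + betaF u v'.
Proof. exact: beta_linl. Qed.
Lemma beta_in1 u v : beta u v \in (1%VS : {vspace L}).
Proof. exact: trace_in1. Qed.
Lemma betaF_in1 u v : betaF u v \in (1%VS : {vspace L}).
Proof. exact: trace_in1. Qed.
Lemma betaF_ndr v : (forall u, betaF u v = 0) -> v = 0.
Proof. exact: beta_ndl. Qed.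
Lemma betaF_Lsym a u v : betaF (Lscale a u) v = betaF u (Lscale a v).
Proof. exact: (esym (beta_Lsym a v u)). Qed.

Lemma memR (X : {vspace V}) v : reflect (forall u, u \in X -> beta u v = 0) (v \in Rd beta X).
Proof. exact: (memRd beta_linl beta_linr). Qed.
Lemma memL (X : {vspace V}) u : reflect (forall v, v \in X -> beta u v = 0) (u \in Rd betaF X).
Proof. exact: (memRd betaF_linl betaF_linr). Qed.
Lemma dimR X : \dim (Rd beta X) = (k * m - \dim X)%N.
Proof. exact: (dimRd beta_linl beta_linr beta_in1 beta_ndr). Qed.
Lemma dimL X : \dim (Rd betaF X) = (k * m - \dim X)%N.
Proof. exact: (dimRd betaF_linl betaF_linr betaF_in1 betaF_ndr). Qed.
Lemma R_add X Y : Rd beta (X + Y) = (Rd beta X :&: Rd beta Y)%VS.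
Proof. exact: (Rd_add beta_linl beta_linr). Qed.
Lemma R_Lclosed X : Lclosed X -> Lclosed (Rd beta X).
Proof. exact: (Rd_Lclosed beta_linl beta_linr beta_Lsym). Qed.
Lemma L_Lclosed X : Lclosed X -> Lclosed (Rd betaF X).
Proof. exact: (Rd_Lclosed betaF_linl betaF_linr betaF_Lsym). Qed.
Lemma L_sub X Y : (X <= Y)%VS -> (Rd betaF Y <= Rd betaF X)%VS.
Proof. exact: (Rd_sub betaF_linl betaF_linr). Qed.

Lemma dim_le (X : {vspace V}) : (\dim X <= k * m)%N.
Proof. by rewrite -dimV dimvS ?subvf. Qed.

Lemma RL Y : Rd beta (Rd betaF Y) = Y.
Proof.
apply/eqP; rewrite eq_sym eqEdim; apply/andP; split.
  by apply/subvP => v vY; apply/memR => u /memL; apply.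
have := dimR (Rd betaF Y); have := dimL Y; have := dim_le Y; lia.
Qed.

Lemma LR X : Rd betaF (Rd beta X) = X.
Proof.
apply/eqP; rewrite eq_sym eqEdim; apply/andP; split.
  by apply/subvP => u uX; apply/memL => v /memR; apply.
have := dimL (Rd beta X); have := dimR X; have := dim_le X; lia.
Qed.
End Main.
Section Count.
Variables (F : finFieldType) (L : fieldExtType F) (k : nat).
Local Notation V := (Vk L k).

Lemma card_nz (Z0 : {vspace V}) :
  (#|[predD1 (Z0 : {vspace finvect_type V}) & (0 : finvect_type V)%R]| + 1 = #|F| ^ \dim Z0)%N.
Proof.
rewrite -(card_vspace (Z0 : {vspace finvect_type V})) [in RHS](cardD1 (0 : finvect_type V)%R).
rewrite [X in (_ = nat_of_bool X + _)%N](_ : _ = true); first by rewrite addnC.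
exact: mem0v.
Qed.

Lemma count_contra (Z0 : {vspace V}) (P : L -> V -> bool) :
  (forall a, exists z, [/\ z \in Z0, z != 0 & P a z]) ->
  (forall a b z, z \in Z0 -> z != 0 -> P a z -> P b z -> a = b) ->
  (\dim {:L} < \dim Z0)%N.
Proof.
move=> ex uniq.
pose f (a : finvect_type L) : finvect_type V :=
  odflt 0 [pick z : finvect_type V | (z \in Z0) && (z != 0) && P a z].
have fP a : [&& (f a \in Z0), (f a != 0) & P a (f a)].
  rewrite /f; case: pickP => [z /andP[/andP[h1 h2] h3]|none] /=.
    by rewrite h1 h2 h3.
  have [z [z1 z2 z3]] := ex a; have := none z; by rewrite z1 z2 z3.
have finj : injective f.
  move=> a b eab; have /and3P[a1 a2 a3] := fP a; have /and3P[_ _ b3] := fP b.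
  by apply: (uniq a b (f a)) => //; rewrite eab.
have le : (#|finvect_type L| <= #|[predD1 (Z0 : {vspace finvect_type V}) & (0 : finvect_type V)%R]|)%N.
  rewrite -(card_imset (mem predT) finj) cardE.
  rewrite -cardE; apply: subset_leq_card; apply/subsetP => _ /imsetP[a _ ->].
  by have /and3P[a1 a2 _] := fP a; rewrite inE /= a2 a1.
have := card_nz Z0; rewrite -(ltn_exp2l _ _ (q_gt1 F)) -card_L.
lia.
Qed.
End Count.
Section Thm2.
Variables (F : finFieldType) (L : fieldExtType F) (k : nat).
Local Notation V := (Vk L k).
Local Notation m := (\dim {:L}).

Lemma indep (T : {vspace V}) v1 v2 : Lclosed T -> v1 \notin T -> v2 \notin (T + Lline v1)%VS ->
  forall x y, Lscale x v1 + Lscale y v2 \in T -> x = 0 /\ y = 0.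
Proof.
move=> cT n1 n2 x y h.
have [y0|y0] := eqVneq y 0.
  move: h; rewrite y0 Lscale0 addr0 => h; split => //.
  by apply: NNPP => /eqP x0; move: n1; rewrite (Lclosed_inv cT x0 h).
exfalso; move/negP: n2; apply.
have -> : v2 = Lscale y^-1 (Lscale x v1 + Lscale y v2) + Lscale (- (y^-1 * x)) v1.
  by rewrite LscaleDr !LscaleA mulVf // Lscale1 LscaleN addrC addKr.
by rewrite memv_add ?cT //; apply/memLline; eexists.
Qed.

Lemma H_uniq (T : {vspace V}) v1 v2 a b z : Lclosed T -> v1 \notin T -> v2 \notin (T + Lline v1)%VS ->
  z \notin T -> z \in (T + Lline (v2 + Lscale a v1)%R)%VS -> z \in (T + Lline (v2 + Lscale b v1)%R)%VS ->
  a = b.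
Proof.
move=> cT n1 n2 zT /memv_addP[t tT [y /memLline[c ->] Ez]] /memv_addP[t' t'T [y' /memLline[c' ->] Ez']].
have := indep cT n1 n2 (x := c' * b - c * a) (y := c' - c).
have -> : Lscale (c' * b - c * a) v1 + Lscale (c' - c) v2 = t - t'.
  apply/ffunP => i.
  have := congr1 (fun f : V => f i) (etrans (esym Ez) Ez').
  rewrite !ffunE => E.
  have -> : t i = t' i + c' * (v2 i + b * v1 i) - c * (v2 i + a * v1 i) by rewrite -E addrK.
  ring.
move=> /(_ (memvB tT t'T)) [e1 e2].
have cc : c' = c by apply/eqP; rewrite -subr_eq0 e2.
have [c0|c0] := eqVneq c 0.
  by move: zT; rewrite Ez c0 Lscale0 addr0 tT.
by move: e1; rewrite cc -mulrBr => /eqP; rewrite mulf_eq0 (negbTE c0) subr_eq0 => /eqP.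
Qed.
End Thm2.
Section Thm.
Variables (F : finFieldType) (L : fieldExtType F) (k : nat).
Local Notation V := (Vk L k).
Local Notation m := (\dim {:L}).
Variable sigma : V -> V -> L.
Hypothesis sbil : Lbilinear sigma.
Hypothesis snd : nondeg_form sigma.
Variables U W : {vspace V}.
Hypothesis k0 : (0 < k)%N.
Hypothesis hev : ~~ odd (k * extdeg L).
Local Notation n := ((k * extdeg L)./2).
Hypothesis hsysU : is_system U n.
Hypothesis hsc : scattered U.
Hypothesis hdual : is_dual sigma U W.

Local Notation beta := (beta sigma).
Local Notation betaF := (betaF sigma).

Lemma hkm : (k * m = n + n)%N.
Proof. by have := odd_double_half (k * m); rewrite /extdeg (negbTE hev) add0n -addnn. Qed.

Lemma W_eq : W = Rd beta U.
Proof.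
apply/vspaceP => v; apply/idP/idP => [/hdual h|/(memR sbil) h].
  by apply/(memR sbil) => u /h.
by apply/hdual => u /h.
Qed.

Lemma dimW : \dim W = n.
Proof.
rewrite W_eq (dimR sbil snd); case: hsysU => -> _; have := hkm; rewrite /extdeg; lia.
Qed.

Lemma W_span : is_Lspan W fullv.
Proof.
split; [exact: Lclosedf | exact: subvf |] => H' cH' sWH'.
apply: NNPP => nf.
case: (dimv_leqif_sup (subvf H')) => le e.
have ltH : (\dim H' < k * m)%N.
  rewrite -dimV ltn_neqAle le andbT e; apply/negP => h; exact: nf h.
set X := Rd betaF H'.
have dX := dimL sbil snd H'; rewrite -/X in dX.
have sXU : (X <= U)%VS.
  have := L_sub sbil sWH'; rewrite W_eq (LR sbil snd) //.
have nX0 : ~~ (X <= 0)%VS.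
  apply/negP => /dimvS; rewrite dimv0 dX; lia.
have [v vX v0] := exists_notin nX0; rewrite memv0 in v0.
have cX : Lclosed X := L_Lclosed sbil cH'.
have sLU : (Lline v <= U)%VS.
  apply: subv_trans sXU; apply/subvP => w /memLline[a ->]; exact: cX.
have := hsc (@Lclosed_line _ _ _ v).
rewrite /Ldim_eq dim_line // mul1r /extdeg => /(_ erefl).
rewrite (capv_idPr sLU) dim_line // => m1.
have mE : m = 1%N by have := m_gt0 L; lia.
have cU : Lclosed U.
  move=> a u uU.
  have a1 : a \in (1%VS : {vspace L}).
    have -> : (1%VS : {vspace L}) = fullv.
      by apply/eqP; rewrite eqEdim subvf dimv1 mE.
    exact: memvf.
  have /vlineP[c ->] := a1.
  by rewrite -LscaleZ Lscale1 memvZ.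
case: hsysU => dU [_ _ /(_ U cU (subvv U))] /dimvS.
rewrite dimV dU; have := hkm; rewrite /extdeg mE; lia.
Qed.

Lemma dimWcap (H : {vspace V}) :
  \dim (W :&: Rd beta H) + \dim (U + H) = (k * m)%N.
Proof.
rewrite W_eq -(R_add sbil) (dimR sbil snd).
by have := dim_le (U + H); lia.
Qed.

Lemma imp12 : evasive U 2 ((extdeg L)%:Z - 1) ->
  evasive W (k%:Z - 2) ((n%:Z - (extdeg L)%:Z - 1)).
Proof.
rewrite /extdeg => ev T cT; rewrite /Ldim_eq /extdeg => dT.
set H := Rd betaF T.
have cH : Lclosed H := L_Lclosed sbil cT.
have dH := dimL sbil snd T; rewrite -/H in dH.
have TE : T = Rd beta H by rewrite /H (RL sbil snd).
have dTle := dim_le T.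
have eT : (\dim T + 2 * m = k * m)%N.
  move: dT; rewrite mulrBl -PoszM.
  have := m_gt0 L; move: (k * m)%N dTle => km h1 h2.
  rewrite -PoszM => h; lia.
have := ev H cH; rewrite /Ldim_eq /extdeg dH.
have -> : ((k * m - \dim T)%:Z = 2 * m%:Z) by rewrite -PoszM; lia.
move=> /(_ erefl) hUH.
have := dimWcap H; rewrite -TE.
have := dimv_sum_cap U H; rewrite dH; case: hsysU => -> _.
have := hkm; rewrite /extdeg.
move: hUH; move: (\dim (U :&: H)) (\dim (U + H)) (\dim (W :&: T)) => a b c.
move: (k * m)%N eT dTle => km; lia.
Qed.

Lemma imp21 : evasive W (k%:Z - 2) ((n%:Z - (extdeg L)%:Z - 1)) ->
  evasive U 2 ((extdeg L)%:Z - 1).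
Proof.
rewrite /extdeg => ev H cH; rewrite /Ldim_eq /extdeg => dH.
have dH' : \dim H = (2 * m)%N by apply/eqP; rewrite -eqz_nat PoszM dH.
set T := Rd beta H.
have cT : Lclosed T := R_Lclosed sbil cH.
have dT := dimR sbil snd H; rewrite -/T in dT.
have dHle := dim_le H.
have := ev T cT; rewrite /Ldim_eq /extdeg dT dH'.
have -> : ((k * m - 2 * m)%N%:Z = (k%:Z - 2) * m%:Z).
  rewrite mulrBl -!PoszM; move: dHle; rewrite dH'; move: (k * m)%N => km; lia.
move=> /(_ erefl) hWT.
have := dimWcap H; rewrite -/T.
have := dimv_sum_cap U H; rewrite dH'; case: hsysU => -> _.
have := hkm; rewrite /extdeg.
move: hWT; move: (\dim (U :&: H)) (\dim (U + H)) (\dim (W :&: T)) => a b c.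
move: dHle; rewrite dH'; move: (k * m)%N => km; lia.
Qed.

Lemma imp23 : evasive W (k%:Z - 2) ((n%:Z - (extdeg L)%:Z - 1)) -> cutting W.
Proof.
rewrite /extdeg => ev H cH; rewrite /Ldim_eq /extdeg => dH.
split; [exact: cH | exact: capvSl |] => H' cH' sHWH'.
apply: NNPP => nHH'.
set S := (H :&: H')%VS.
have cS : Lclosed S := Lclosed_cap cH cH'.
have nHS : ~~ (H <= S)%VS.
  by apply/negP; rewrite subv_cap subvv /= => h; apply: nHH'.
have [v vH vS] := exists_notin nHS.
have sSvH : (S + Lline v <= H)%VS.
  by rewrite subv_add capvSl; apply/subvP => w /memLline[a ->]; exact: cH.
have := dimvS sSvH; rewrite dim_add_line // => hS.
have [j dS] : exists j, \dim S = (j * m)%N.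
  by exists (\dim S %/ m)%N; rewrite divnK // dvd_L.
have m0 := m_gt0 L.
have dHle := dim_le H.
have eH : (\dim H + m = k * m)%N.
  move: dH; rewrite mulrBl -PoszM mul1r; move: (k * m)%N dHle => km h1 h2; lia.
have jk : (j.+2 <= k)%N.
  have : (j.+2 * m <= k * m)%N by rewrite !mulSn -eH -dS; lia.
  by rewrite leq_pmul2r.
have hle : (\dim S + (k - 2 - j) * m <= \dim H)%N.
  rewrite dS -mulnDl subnKC; last by lia.
  have : ((k - 2) * m + 2 * m = k * m)%N by rewrite -mulnDl subnK //; lia.
  lia.
have [T [cT sST sTH dT]] := extend_L cS cH (capvSl H H') hle.
have dT' : \dim T = ((k - 2) * m)%N by rewrite dT dS -mulnDl subnKC //; lia.
have := ev T cT; rewrite /Ldim_eq /extdeg dT' PoszM.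
have -> : ((k - 2)%N%:Z = k%:Z - 2) by lia.
move=> /(_ erefl) hWT.
have sWHT : (W :&: H <= W :&: T)%VS.
  rewrite subv_cap capvSl /=; apply: subv_trans sST.
  by rewrite subv_cap capvSr /= capvC.
have := dimvS sWHT.
have := dimv_sum_cap W H; have := dim_le (W + H); rewrite dimW.
have := hkm; rewrite /extdeg.
move: hWT; move: (\dim (W :&: H)) (\dim (W + H)) (\dim (W :&: T)) => a b c.
move: (k * m)%N eH => km; lia.
Qed.

Lemma imp32 : cutting W -> evasive W (k%:Z - 2) ((n%:Z - (extdeg L)%:Z - 1)).
Proof.
rewrite /extdeg => cut T cT; rewrite /Ldim_eq /extdeg => dT.
apply: NNPP => /negP; rewrite -ltNge => hbig.
have m0 := m_gt0 L.
have dTle := dim_le T.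
have eT : (\dim T + 2 * m = k * m)%N.
  move: dT; rewrite mulrBl -PoszM.
  move: (k * m)%N dTle => km h1 h2; lia.
have n1T : ~~ (fullv <= T)%VS.
  by apply/negP => /dimvS; rewrite dimV; lia.
have [v1 _ n1] := exists_notin n1T.
have n2T : ~~ (fullv <= T + Lline v1)%VS.
  apply/negP => /dimvS; rewrite dimV dim_add_line //; lia.
have [v2 _ n2] := exists_notin n2T.
pose w a := (v2 + Lscale a v1)%R.
pose H a := (T + Lline (w a))%VS.
have wT a : w a \notin T.
  apply/negP => h; have := indep cT n1 n2 (x := a) (y := 1).
  rewrite Lscale1 addrC => /(_ h) [_ /eqP]; by rewrite oner_eq0.
set Z0 := (W :\: T)%VS.
have dZ0 := dimv_cap_compl W T; rewrite dimW -/Z0 in dZ0.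
have good a : exists z, [/\ z \in Z0, z != 0 & z \in H a].
  have cHa : Lclosed (H a) by apply: Lclosed_add => //; apply: Lclosed_line.
  have dHa : Ldim_eq (H a) (k%:Z - 1).
    rewrite /Ldim_eq /extdeg dim_add_line // mulrBl mul1r -PoszM.
    move: (k * m)%N eT => km; lia.
  have [_ _ minH] := cut (H a) cHa dHa.
  have nHWT : ~~ (H a :&: W <= T)%VS.
    apply/negP => /(minH T cT) /subvP /(_ (w a)).
    have -> : w a \in H a by apply: (subvP (addvSr _ _)); exact: mem_Lline.
    by move=> /(_ isT); apply/negP.
  have [z' /memv_capP[z'H z'W] z'T] := exists_notin nHWT.
  move: z'W; rewrite -{1}(addv_diff_cap W T) -/Z0 => /memv_addP[z zZ [t tWT Ez']].
  have tT : t \in T by move: tWT; rewrite memv_cap => /andP[].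
  have zT : z \notin T by apply: contra z'T => zT; rewrite Ez' memvD.
  exists z; split => //.
    by apply: contraNneq zT => ->; rewrite mem0v.
  have -> : z = z' - t by rewrite Ez' addrK.
  by rewrite memvB // (subvP (addvSl _ _)).
have capZT : (Z0 :&: T = 0)%VS by apply: capv_diff.
have hlt : (m < \dim Z0)%N.
  apply: (count_contra (P := fun a z => z \in H a) good).
  move=> a b z zZ z0 za zb.
  have zT : z \notin T.
    apply/negP => zT; move: z0; have : z \in (Z0 :&: T)%VS by rewrite memv_cap zZ zT.
    by rewrite capZT memv0 => ->.
  exact: (H_uniq cT n1 n2 zT za zb).
move: hbig dZ0 hlt; move: (\dim (W :&: T)) (\dim Z0) => a b; lia.
Qed.
End Thm.

Theorem proposition3p9 (F : finFieldType) (L : fieldExtType F) (k : nat)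
  (sigma : Vk L k -> Vk L k -> L) (U W : {vspace Vk L k}) :
  (0 < k)%N -> ~~ odd (k * extdeg L) ->
  Lbilinear sigma -> nondeg_form sigma ->
  is_system U (k * extdeg L)./2 -> scattered U ->
  is_dual sigma U W ->
  [<-> evasive U 2 ((extdeg L)%:Z - 1) ;
       is_system W (k * extdeg L)./2 /\
         evasive W (k%:Z - 2) (((k * extdeg L)./2)%:Z - (extdeg L)%:Z - 1) ;
       is_system W (k * extdeg L)./2 /\ cutting W].
Proof.
move=> k0 hev sbil snd hsysU hsc hdual.
have sysW : is_system W (k * extdeg L)./2.
  split; first exact: (dimW sbil snd k0 hev hsysU hdual).
  exact: (W_span sbil snd k0 hev hsysU hsc hdual).
tfae => [h|[_ h]|[_ h]].
- by split => //; apply: (imp12 sbil snd k0 hev hsysU hdual h).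
- by split => //; apply: (imp23 sbil snd k0 hev hsysU hdual h).
- by apply: (imp21 sbil snd k0 hev hsysU hdual); apply: (imp32 sbil snd k0 hev hsysU hdual h).
Qed.
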